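(* Let $k \ge 1$ and $x \in \{2,3,4,5\}$ be integers, $m = 4k+x$, $\theta = 2\pi/m$. Let $u, v, w$ be points in general position with $w \in C_0^u$ and $v \in T_{uw}$, with $v$ to the left of $w$. Let $a$ be the intersection point of the side of $T_{uw}$ opposite $u$ with the left boundary ray of $C_0^v$. Let $C_i^v$ be the cone of $v$ containing $w$, and let $c$ and $d$ be the upper and lower corners of $T_{vw}$ (the two corners other than $v$). If $1 \le i \le k-1$, or if $i = k$ and $|cw| \le |dw|$, then $$\max\{|vc| + |cw|,\ |vd| + |dw|\} \le |va| + |aw| \quad\text{and}\quad \max\{|cw|, |dw|\} \le |aw|.$$
   Context: Cones: for $m \ge 2$, $\theta = 2\pi/m$; around each point $u$ draw $m$ rays with consecutive angular separation $\theta$, oriented so the vertical upward ray from $u$ bisects a cone, called $C_0^u$; cones are numbered $C_0^u,\dots,C_{m-1}^u$ clockwise, with the same orientation at every point. General position: no two points on a line parallel to a cone boundary ray, no two points on a line perpendicular to a cone bisector, no three points collinear. Canonical triangle: if $w$ lies in cone $C$ of $u$, $T_{uw}$ is the triangle bounded by the two boundary rays of $C$ and the line through $w$ perpendicular to the bisector of $C$. *)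

(* Defs.v *)
From Stdlib Require Import Reals List.
Open Scope R_scope.

Definition point := (R * R)%type.

Definition padd (p q : point) : point := (fst p + fst q, snd p + snd q).
Definition psub (p q : point) : point := (fst p - fst q, snd p - snd q).
Definition pscale (t : R) (p : point) : point := (t * fst p, t * snd p).
Definition dot (p q : point) : R := fst p * fst q + snd p * snd q.
Definition cross (p q : point) : R := fst p * snd q - snd p * fst q.
Definition pdist (p q : point) : R :=
  sqrt ((fst p - fst q) ^ 2 + (snd p - snd q) ^ 2).

Definition dir (al : R) : point := (cos al, sin al).

Definition theta (m : nat) : R := 2 * PI / INR m.

(* Angle of the bisector of cone C_j: C_0 is bisected by the upward vertical
   ray (angle pi/2) and cones are numbered clockwise. *)
Definition bis (m j : nat) : R := PI / 2 - INR j * theta m.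

(* p lies in cone C_j^u: p <> u and the direction of p - u makes an angle
   of at most theta/2 with the bisector of C_j (closed cone; boundary
   issues are excluded by general position). *)
Definition in_cone (m j : nat) (u p : point) : Prop :=
  exists (r al : R), 0 < r /\
    bis m j - theta m / 2 <= al <= bis m j + theta m / 2 /\
    p = padd u (pscale r (dir al)).

(* p lies in the canonical triangle T_{uw}, where w lies in cone C_j^u:
   the triangle bounded by the two boundary rays of C_j^u and the line
   through w perpendicular to the bisector of C_j^u. *)
Definition in_canon_tri (m j : nat) (u w p : point) : Prop :=
  (p = u \/ in_cone m j u p) /\
  dot (psub p u) (dir (bis m j)) <= dot (psub w u) (dir (bis m j)).

(* p is the corner of T_{vw} (w in cone C_j^v) lying on the boundary ray of
   C_j^v of angle  bis j + s * theta/2  (s = 1 or s = -1): the intersection of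
   that ray with the line through w perpendicular to the bisector. *)
Definition is_corner (m j : nat) (v w : point) (s : R) (p : point) : Prop :=
  exists t : R, 0 <= t /\
    p = padd v (pscale t (dir (bis m j + s * (theta m / 2)))) /\
    dot (psub p v) (dir (bis m j)) = dot (psub w v) (dir (bis m j)).

Definition gen_pos (m : nat) (P : list point) : Prop :=
  (forall p q, In p P -> In q P -> p <> q ->
     forall j : nat, (j < m)%nat ->
       cross (psub q p) (dir (bis m j + theta m / 2)) <> 0 /\
       cross (psub q p) (dir (bis m j - theta m / 2)) <> 0 /\
       dot (psub q p) (dir (bis m j)) <> 0) /\
  (forall p q r, In p P -> In q P -> In r P -> p <> q -> p <> r -> q <> r ->
     cross (psub q p) (psub r p) <> 0).

(* Main.v *)
Require Import Defs.
From Stdlib Require Import Reals List Lra Psatz Lia.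
Open Scope R_scope.
Lemma sin_le_cos_next (g y : R): 0 <= g -> 0 <= y -> 2*y + g <= PI/2 -> sin y <= cos (y + g).
Proof. intros. rewrite <- cos_shift. pose proof PI_RGT_0. apply cos_decr_1; lra. Qed.

Lemma E1gen (g p: R): 0 < g -> 2*g <= p -> p + 2*g <= PI -> sin(2*g) <= sin p.
Proof.
  intros. pose proof PI_RGT_0.
  assert (H3 := form4 p (2*g)).
  assert (0 <= cos ((p + 2*g)/2)) by (apply cos_ge_0; lra).
  assert (0 <= sin ((p - 2*g)/2)) by (apply sin_ge_0; lra).
  assert (0 <= cos ((p + 2*g)/2) * sin ((p - 2*g)/2)) by (apply Rmult_le_pos; auto).
  lra.
Qed.

Lemma E3gen (g p : R): 0 < g -> 2*g <= p -> 2*p + 2*g <= PI ->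
  cos g + sin (2*g) <= cos (p - g) + sin p.
Proof.
  intros. pose proof PI_RGT_0.
  assert (H3 := form4 p (2*g)).
  assert (H4 := form2 (p - g) g).
  replace ((p - g - g)/2) with ((p - 2*g)/2) in H4 by field.
  replace ((p - g + g)/2) with (p/2) in H4 by field.
  replace ((p + 2*g)/2) with (p/2 + g) in H3 by field.
  assert (0 <= sin ((p - 2*g)/2)) by (apply sin_ge_0; lra).
  assert (sin (p/2) <= cos (p/2 + g)) by (apply sin_le_cos_next; lra).
  assert (0 <= sin ((p - 2*g)/2) * (cos (p/2 + g) - sin (p/2))) by (apply Rmult_le_pos; lra).
  lra.
Qed.

Lemma E5gen (g p : R): 0 < g -> 0 <= p -> p + g <= PI/2 ->
  1 + sin g <= cos p * (1 + sin g) + sin p * cos g.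
Proof.
  intros. pose proof PI_RGT_0.
  replace p with (2 * (p/2)) by field.
  rewrite cos_2a_sin, sin_2a.
  assert (0 <= sin (p/2)) by (apply sin_ge_0; lra).
  assert (sin (p/2) <= cos (p/2 + g)) by (apply sin_le_cos_next; lra).
  rewrite cos_plus in H4.
  assert (0 <= sin (p/2) * (cos (p / 2) * cos g - sin (p / 2) * sin g - sin (p/2)))
    by (apply Rmult_le_pos; lra).
  nra.
Qed.
Lemma div_help (s c Y Z k : R) : 0 < k -> 0 < s -> 0 < c -> 0 <= k*s*(c*Y - c*Z) -> Z <= Y.
Proof.
  intros Hk Hs Hc H.
  assert (0 < k*s) by (apply Rmult_lt_0_compat; auto).
  assert (0 <= c*Y - c*Z).
  { destruct (Rle_or_lt 0 (c*Y - c*Z)) as [h|h]; auto.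
    assert (k*s*(c*Y-c*Z) < 0) by nra. lra. }
  destruct (Rle_or_lt Z Y) as [h|h]; auto.
  assert (c*(Y-Z) < 0) by nra. lra.
Qed.

Lemma claims (cg sg cb sb t P ta: R) :
  0 < cg -> 0 < sg -> cg^2 + sg^2 = 1 ->
  ta*cg = t*cg*sb + P*cb ->
  -(t*sg) <= P <= t*sg ->
  0 <= cb - 2*sg*cg ->
  0 <= cb*(cg*cg-sg*sg) + 2*sb*sg*cg - 2*sg*cg ->
  0 <= sb*cg + cb*sg + cb - cg - 2*sg*cg ->
  0 <= sb*(1+sg) + cb*cg - 1 - sg ->
  (0 <= (sb*cg - cb*sg) + (cb*(cg*cg-sg*sg) + 2*sb*sg*cg) - cg - 2*sg*cg \/ 0 <= P) ->
  Rmax (t + (t*sg - P)) (t + (t*sg + P)) <= ta + ((t*cg*cb - P*sb) + ta*sg) /\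
  Rmax (t*sg - P) (t*sg + P) <= (t*cg*cb - P*sb) + ta*sg.
Proof.
  intros Hc Hs Hpy Hta HP E1 E2 E3 E5 E4.
  assert (Hpc : (t*sg + P)*cb*(cg^2+sg^2) = (t*sg+P)*cb) by (rewrite Hpy; ring).
  assert (Hpc2 : (t*sg - P)*cb*(cg^2+sg^2) = (t*sg-P)*cb) by (rewrite Hpy; ring).
  assert (Hpc3 : P*cb*(cg^2+sg^2) = P*cb) by (rewrite Hpy; ring).
  assert (a1 : 0 <= t*sg - P) by lra.
  assert (a2 : 0 <= t*sg + P) by lra.
  assert (C2p : t*sg + P <= (t*cg*cb - P*sb) + ta*sg).
  { assert (h1 := Rmult_le_pos _ _ a1 (Rplus_le_le_0_compat _ (2*sg*cg) E2 ltac:(nra))).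
    assert (h2 := Rmult_le_pos _ _ a2 E1).
    assert (0 <= 2*sg*(cg*((t*cg*cb - P*sb) + ta*sg) - cg*(t*sg+P))).
    { replace (cg*((t*cg*cb - P*sb) + ta*sg)) with (cg*(t*cg*cb - P*sb) + sg*(ta*cg)) by ring.
      rewrite Hta. lra. }
    apply (div_help sg cg _ _ 2); lra. }
  assert (C2m : t*sg - P <= (t*cg*cb - P*sb) + ta*sg).
  { assert (h1 := Rmult_le_pos _ _ a1 E2).
    assert (h2 := Rmult_le_pos _ _ a2 (Rplus_le_le_0_compat _ (2*sg*cg) E1 ltac:(nra))).
    assert (0 <= 2*sg*(cg*((t*cg*cb - P*sb) + ta*sg) - cg*(t*sg-P))).
    { replace (cg*((t*cg*cb - P*sb) + ta*sg)) with (cg*(t*cg*cb - P*sb) + sg*(ta*cg)) by ring.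
      rewrite Hta. lra. }
    apply (div_help sg cg _ _ 2); lra. }
  split; [| apply Rmax_lub; assumption].
  assert (Hrhs : cg*(ta + ((t*cg*cb - P*sb) + ta*sg)) = (ta*cg)*(1+sg) + cg*(t*cg*cb - P*sb)) by ring.
  destruct E4 as [E4 | Pp].
  - assert (C1p : t + (t*sg + P) <= ta + ((t*cg*cb - P*sb) + ta*sg)).
    { assert (h1 := Rmult_le_pos _ _ a1 (Rplus_le_le_0_compat _ (2*sg*cg) E4 ltac:(nra))).
      assert (h2 := Rmult_le_pos _ _ a2 E3).
      assert (0 <= 2*sg*(cg*(ta + ((t*cg*cb - P*sb) + ta*sg)) - cg*(t + (t*sg+P)))).
      { rewrite Hrhs, Hta. lra. }
      apply (div_help sg cg _ _ 2); lra. }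
    assert (C1m : t + (t*sg - P) <= ta + ((t*cg*cb - P*sb) + ta*sg)).
    { assert (h1 := Rmult_le_pos _ _ a1 E4).
      assert (h2 := Rmult_le_pos _ _ a2 (Rplus_le_le_0_compat _ (2*sg*cg) E3 ltac:(nra))).
      assert (0 <= 2*sg*(cg*(ta + ((t*cg*cb - P*sb) + ta*sg)) - cg*(t + (t*sg-P)))).
      { rewrite Hrhs, Hta. lra. }
      apply (div_help sg cg _ _ 2); lra. }
    apply Rmax_lub; assumption.
  - assert (C1p : t + (t*sg + P) <= ta + ((t*cg*cb - P*sb) + ta*sg)).
    { assert (h1 := Rmult_le_pos _ _ a1 (Rmult_le_pos _ _ (Rlt_le _ _ Hc) E5)).
      assert (h2 := Rmult_le_pos _ _ Pp E3).
      assert (0 <= 1*sg*(cg*(ta + ((t*cg*cb - P*sb) + ta*sg)) - cg*(t + (t*sg+P)))).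
      { rewrite Hrhs, Hta. lra. }
      apply (div_help sg cg _ _ 1); lra. }
    apply Rmax_lub; [|assumption]. lra.
Qed.
Lemma dist_comp dx dy e1 e2 s: e1^2+e2^2 = 1 -> dx = e1*s -> dy = e2*s -> 0 <= s -> sqrt(dx^2+dy^2) = s.
Proof. intros H H1 H2 H3; subst.
  replace ((e1*s)^2 + (e2*s)^2) with (s^2*(e1^2+e2^2)) by ring.
  rewrite H, Rmult_1_r; apply sqrt_pow2; auto. Qed.
Lemma pyth a : (cos a)^2 + (sin a)^2 = 1.
Proof. rewrite <- (sin2_cos2 a); unfold Rsqr; ring. Qed.
Lemma pythN a : (- cos a)^2 + (- sin a)^2 = 1.
Proof. rewrite <- (sin2_cos2 a); unfold Rsqr; ring. Qed.
Lemma pdist_dir v t al : 0 <= t -> pdist v (padd v (pscale t (dir al))) = t.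
Proof. intros. unfold pdist, padd, pscale, dir; simpl.
  apply (dist_comp _ _ (- cos al) (- sin al)); [apply pythN | ring | ring | auto]. Qed.
Theorem mainTheorem3 :
  forall (k x : nat) (u v w a c d : point) (i : nat),
    (1 <= k)%nat -> (2 <= x <= 5)%nat ->
    let m := (4 * k + x)%nat in
    NoDup (u :: v :: w :: nil) ->
    gen_pos m (u :: v :: w :: nil) ->
    in_cone m 0 u w ->
    in_canon_tri m 0 u w v ->
    fst v < fst w ->
    snd a = snd w ->
    (exists t : R, 0 <= t /\ a = padd v (pscale t (dir (bis m 0 + theta m / 2)))) ->
    (i < m)%nat ->
    in_cone m i v w ->
    ((is_corner m i v w 1 c /\ is_corner m i v w (-1) d) \/
     (is_corner m i v w (-1) c /\ is_corner m i v w 1 d)) ->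
    snd d <= snd c ->
    ((1 <= i <= k - 1)%nat \/ (i = k /\ pdist c w <= pdist d w)) ->
    Rmax (pdist v c + pdist c w) (pdist v d + pdist d w) <= pdist v a + pdist a w /\
    Rmax (pdist c w) (pdist d w) <= pdist a w.
Proof.
  intros k x u v w a c d i Hk Hx m Hnd Hgp Hcu Htri Hvw Hay Ha Him Hcone Hcorn Hdc Hcase.
  clear Hnd Hgp Hcu Htri.
  pose proof PI_RGT_0 as HPI.
  assert (HmR : INR m = 4 * INR k + INR x) by (unfold m; rewrite plus_INR, mult_INR; simpl; ring).
  assert (Hib : (1 <= i)%nat /\ (i <= k)%nat) by (destruct Hcase as [H|[H _]]; lia).
  assert (Hk1 : 1 <= INR k) by (apply (le_INR 1); lia).
  assert (Hx2 : 2 <= INR x) by (apply (le_INR 2); lia).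
  assert (Hi1 : 1 <= INR i) by (apply (le_INR 1); lia).
  assert (Hik : INR i <= INR k) by (apply le_INR; lia).
  assert (Hm0 : 0 < INR m) by lra.
  set (gam := PI / INR m).
  assert (Hg : gam * INR m = PI) by (unfold gam; field; lra).
  assert (Hgp : 0 < gam) by (unfold gam; apply Rdiv_lt_0_compat; lra).
  assert (Hth : theta m / 2 = gam) by (unfold theta, gam; field; lra).
  set (phi := INR i * theta m).
  assert (Hphi : phi = 2 * INR i * gam) by (unfold phi; rewrite <- Hth; field).
  assert (Hbis : bis m i = PI/2 - phi) by reflexivity.
  assert (C1 : 2 * gam <= phi) by (rewrite Hphi; nra).
  assert (C2 : 2 * phi + 2 * gam <= PI).
  { rewrite Hphi, <- Hg.
    assert (0 <= (INR m - (4 * INR i + 2)) * gam) by (apply Rmult_le_pos; lra). lra. }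
  assert (C3 : gam < PI/2).
  { rewrite <- Hg. assert (0 <= (INR m - 6) * gam) by (apply Rmult_le_pos; lra). lra. }
  assert (Hpy : cos gam ^ 2 + sin gam ^ 2 = 1) by apply pyth.
  assert (Hpyb : sin phi ^ 2 + cos phi ^ 2 = 1) by (rewrite Rplus_comm; apply pyth).
  assert (Hcg : 0 < cos gam) by (apply cos_gt_0; lra).
  assert (Hsg : 0 < sin gam) by (apply sin_gt_0; lra).
  assert (Hcb : 0 < sin phi) by (apply sin_gt_0; lra).
  assert (E1 : 0 <= sin phi - 2 * sin gam * cos gam).
  { assert (H := E1gen gam phi Hgp C1 ltac:(lra)). rewrite sin_2a in H. lra. }
  assert (E2 : 0 <= sin phi * (cos gam * cos gam - sin gam * sin gam)
                 + 2 * cos phi * sin gam * cos gam - 2 * sin gam * cos gam).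
  { assert (H := E1gen gam (phi + 2 * gam) Hgp ltac:(lra) ltac:(lra)).
    rewrite sin_plus, sin_2a, cos_2a in H. lra. }
  assert (E3 : 0 <= cos phi * cos gam + sin phi * sin gam + sin phi - cos gam
                 - 2 * sin gam * cos gam).
  { assert (H := E3gen gam phi Hgp C1 C2). rewrite cos_minus, sin_2a in H. lra. }
  assert (E5 : 0 <= cos phi * (1 + sin gam) + sin phi * cos gam - 1 - sin gam).
  { assert (H := E5gen gam phi Hgp ltac:(lra) ltac:(lra)). lra. }
  assert (E4 : (i + 1 <= k)%nat ->
     0 <= (cos phi * cos gam - sin phi * sin gam)
          + (sin phi * (cos gam * cos gam - sin gam * sin gam) + 2 * cos phi * sin gam * cos gam)
          - cos gam - 2 * sin gam * cos gam).
  { intro Hik1.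
    assert (Hik2 : INR i + 1 <= INR k) by (rewrite <- S_INR; apply le_INR; lia).
    assert (C4 : 2 * (phi + 2 * gam) + 2 * gam <= PI).
    { rewrite Hphi, <- Hg.
      assert (0 <= (INR m - (4 * INR i + 6)) * gam) by (apply Rmult_le_pos; lra). lra. }
    assert (H := E3gen gam (phi + 2 * gam) Hgp ltac:(lra) C4).
    replace (phi + 2 * gam - gam) with (phi + gam) in H by ring.
    rewrite cos_plus, sin_plus, sin_2a, cos_2a in H. lra. }
  assert (Hcb' : cos (bis m i) = sin phi) by (rewrite Hbis; apply cos_shift).
  assert (Hsb' : sin (bis m i) = cos phi) by (rewrite Hbis; apply sin_shift).
  assert (Hc1 : cos (bis m i + 1 * (theta m / 2)) = sin phi * cos gam - cos phi * sin gam)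
    by (rewrite Hth, Rmult_1_l, cos_plus, Hcb', Hsb'; ring).
  assert (Hs1 : sin (bis m i + 1 * (theta m / 2)) = cos phi * cos gam + sin phi * sin gam)
    by (rewrite Hth, Rmult_1_l, sin_plus, Hcb', Hsb'; ring).
  assert (Hc2 : cos (bis m i + -1 * (theta m / 2)) = sin phi * cos gam + cos phi * sin gam).
  { replace (bis m i + -1 * (theta m / 2)) with (bis m i - gam) by (rewrite Hth; ring).
    rewrite cos_minus, Hcb', Hsb'; ring. }
  assert (Hs2 : sin (bis m i + -1 * (theta m / 2)) = cos phi * cos gam - sin phi * sin gam).
  { replace (bis m i + -1 * (theta m / 2)) with (bis m i - gam) by (rewrite Hth; ring).
    rewrite sin_minus, Hcb', Hsb'; ring. }
  assert (Ha0 : bis m 0 + theta m / 2 = PI/2 + gam)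
    by (unfold bis; rewrite Hth; change (INR 0) with 0; ring).
  assert (Hca : cos (bis m 0 + theta m / 2) = - sin gam)
    by (rewrite Ha0, cos_plus, cos_PI2, sin_PI2; ring).
  assert (Hsa : sin (bis m 0 + theta m / 2) = cos gam)
    by (rewrite Ha0, sin_plus, cos_PI2, sin_PI2; ring).
  destruct Hcone as [r [al [Hr [Hal Hw]]]].
  assert (HDP : exists D P, r * cos al = D * sin phi - P * cos phi /\
                            r * sin al = D * cos phi + P * sin phi /\
                            0 < D /\ P * cos gam <= D * sin gam /\ - P * cos gam <= D * sin gam).
  { exists (r * cos (al - bis m i)), (r * sin (al - bis m i)).
    rewrite Hth in Hal.
    assert (Hal' : al = bis m i + (al - bis m i)) by ring.
    set (de := al - bis m i) in *.
    rewrite Hal', cos_plus, sin_plus, Hcb', Hsb'.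
    assert (H1 : 0 <= sin (gam - de)) by (apply sin_ge_0; lra).
    assert (H2 : 0 <= sin (gam + de)) by (apply sin_ge_0; lra).
    assert (H3 : 0 < cos de) by (apply cos_gt_0; lra).
    rewrite sin_minus in H1. rewrite sin_plus in H2.
    repeat split; try ring.
    - apply Rmult_lt_0_compat; lra.
    - assert (0 <= r * (sin gam * cos de - cos gam * sin de)) by (apply Rmult_le_pos; lra). lra.
    - assert (0 <= r * (sin gam * cos de + cos gam * sin de)) by (apply Rmult_le_pos; lra). lra. }
  destruct HDP as [D [P [HX [HY [HD [HP1 HP2]]]]]].
  subst w.
  destruct Ha as [ta [Hta0 Ha]]. subst a.
  unfold padd, pscale, dir in Hay, Hvw. simpl in Hay, Hvw.
  rewrite Hsa, HY in Hay. rewrite HX in Hvw.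
  assert (Hcorner : forall (s : R) (q : point), (s = 1 \/ s = -1) ->
      is_corner m i v (padd v (pscale r (dir al))) s q ->
      exists t, 0 < t /\ t * cos gam = D /\ q = padd v (pscale t (dir (bis m i + s * (theta m / 2))))).
  { intros s q Hs [t [Ht [Hq Hdot]]]. exists t. subst q.
    unfold dot, psub, padd, pscale, dir in Hdot. simpl in Hdot.
    rewrite Hcb', Hsb', HX, HY in Hdot.
    assert (Htd : t * cos gam = D).
    { destruct Hs as [-> | ->]; [rewrite Hc1, Hs1 in Hdot | rewrite Hc2, Hs2 in Hdot].
      - assert (t * cos gam * (sin phi ^ 2 + cos phi ^ 2) = D * (sin phi ^ 2 + cos phi ^ 2)) by lra.
        rewrite Hpyb in H. lra.
      - assert (t * cos gam * (sin phi ^ 2 + cos phi ^ 2) = D * (sin phi ^ 2 + cos phi ^ 2)) by lra.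
        rewrite Hpyb in H. lra. }
    split; [| split; auto].
    destruct Ht as [Ht | <-]; auto. lra. }
  assert (Hcorn' : exists t, 0 < t /\ t * cos gam = D /\
            ((c = padd v (pscale t (dir (bis m i + 1 * (theta m / 2)))) /\
              d = padd v (pscale t (dir (bis m i + -1 * (theta m / 2))))) \/
             (c = padd v (pscale t (dir (bis m i + -1 * (theta m / 2)))) /\
              d = padd v (pscale t (dir (bis m i + 1 * (theta m / 2))))))).
  { destruct Hcorn as [[Hc Hd] | [Hc Hd]].
    - destruct (Hcorner 1 c (or_introl eq_refl) Hc) as [t1 [Ht1 [Ht1D Ec]]].
      destruct (Hcorner (-1) d (or_intror eq_refl) Hd) as [t2 [Ht2 [Ht2D Ed]]].
      assert (t2 = t1) by (apply (Rmult_eq_reg_r (cos gam)); lra). subst t2.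
      exists t1. auto.
    - destruct (Hcorner (-1) c (or_intror eq_refl) Hc) as [t1 [Ht1 [Ht1D Ec]]].
      destruct (Hcorner 1 d (or_introl eq_refl) Hd) as [t2 [Ht2 [Ht2D Ed]]].
      assert (t2 = t1) by (apply (Rmult_eq_reg_r (cos gam)); lra). subst t2.
      exists t1. auto. }
  clear Hcorner Hcorn.
  destruct Hcorn' as [t [Ht [HtD Hcd]]]. subst D.
  destruct Hcd as [[Ec Ed] | [Ec Ed]]; subst c d.
  2:{ exfalso. unfold padd, pscale, dir in Hdc. simpl in Hdc.
      rewrite Hs1, Hs2 in Hdc.
      assert (0 < t * sin phi * sin gam) by (repeat apply Rmult_lt_0_compat; lra). lra. }
  assert (Dvc : pdist v (padd v (pscale t (dir (bis m i + 1 * (theta m / 2))))) = t)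
    by (apply pdist_dir; lra).
  assert (Dvd : pdist v (padd v (pscale t (dir (bis m i + -1 * (theta m / 2))))) = t)
    by (apply pdist_dir; lra).
  assert (Dva : pdist v (padd v (pscale ta (dir (bis m 0 + theta m / 2)))) = ta)
    by (apply pdist_dir; lra).
  assert (HPle : P <= t * sin gam).
  { destruct (Rle_or_lt P (t * sin gam)) as [h|h]; auto.
    assert (P * cos gam > t * sin gam * cos gam) by (apply Rmult_gt_compat_r; lra). lra. }
  assert (HPge : - (t * sin gam) <= P).
  { destruct (Rle_or_lt (- (t * sin gam)) P) as [h|h]; auto.
    assert (- P * cos gam > t * sin gam * cos gam) by (apply Rmult_gt_compat_r; lra). lra. }
  assert (Dcw : pdist (padd v (pscale t (dir (bis m i + 1 * (theta m / 2)))))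
                      (padd v (pscale r (dir al))) = t * sin gam - P).
  { unfold pdist, padd, pscale, dir; simpl. rewrite Hc1, Hs1, HX, HY.
    apply (dist_comp _ _ (- cos phi) (sin phi)); [rewrite <- Hpyb; ring | ring | ring | lra]. }
  assert (Ddw : pdist (padd v (pscale t (dir (bis m i + -1 * (theta m / 2)))))
                      (padd v (pscale r (dir al))) = t * sin gam + P).
  { unfold pdist, padd, pscale, dir; simpl. rewrite Hc2, Hs2, HX, HY.
    apply (dist_comp _ _ (cos phi) (- sin phi)); [rewrite <- Hpyb; ring | ring | ring | lra]. }
  assert (Daw : pdist (padd v (pscale ta (dir (bis m 0 + theta m / 2))))
                      (padd v (pscale r (dir al))) =
                (t * cos gam * sin phi - P * cos phi) + ta * sin gam).
  { unfold pdist, padd, pscale, dir; simpl. rewrite Hca, Hsa, HX, HY.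
    apply (dist_comp _ _ (-1) 0); [ring | ring | lra | ].
    assert (0 <= ta * sin gam) by (apply Rmult_le_pos; lra). lra. }
  rewrite Dvc, Dvd, Dva, Dcw, Ddw, Daw in *.
  apply (claims (cos gam) (sin gam) (sin phi) (cos phi) t P ta); try lra.
  destruct Hcase as [Hb | [_ Hb]].
  - left. apply E4. lia.
  - right. lra.
Qed.
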